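(* Let $\langle M,\sqsubseteq\rangle$ be a mereological structure. Then $\langle M,\mathsf{S}_{\sqsubseteq}\rangle$ satisfies the sum axioms (S1)–(S5) (with $\mathsf{S}:=\mathsf{S}_{\sqsubseteq}$), i.e. it is a sum structure.
   Context: A mereological structure is a pair $\langle M,\sqsubseteq\rangle$ where $M$ is a non-empty set and $\sqsubseteq\subseteq M\times M$ satisfies, for all $x,y,z\in M$: (P1) $x\sqsubseteq x$; (P2) $x\sqsubseteq y\wedge y\sqsubseteq x\to x=y$; (P3) $x\sqsubseteq y\wedge y\sqsubseteq z\to x\sqsubseteq z$; (P4) if $x\not\sqsubseteq y$ then there is $z\in M$ with $z\sqsubseteq x$ such that there is no $u\in M$ with $u\sqsubseteq z$ and $u\sqsubseteq y$; (P5) for every non-empty $X\subseteq M$ there is $x\in M$ such that every $y\in X$ satisfies $y\sqsubseteq x$, and for every $a\in M$ with $a\sqsubseteq x$ there exist $y\in X$ and $z\in M$ with $z\sqsubseteq y$ and $z\sqsubseteq a$. Overlap: $x\circ_{\sqsubseteq} y$ iff there is $z\in M$ with $z\sqsubseteq x$ and $z\sqsubseteq y$. The induced sum relation $\mathsf{S}_{\sqsubseteq}\subseteq M\times\mathcal{P}(M)$: $x\,\mathsf{S}_{\sqsubseteq}\,X$ iff every $y\in X$ satisfies $y\sqsubseteq x$, and for every $a\in M$ with $a\sqsubseteq x$ there is $y\in X$ with $a\circ_{\sqsubseteq} y$. For a set $M$ and a relation $\mathsf{S}\subseteq M\times\mathcal{P}(M)$ define: $x\sqsubseteq_{\mathsf{S}}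 y$ iff there is $X\subseteq M$ with $y\,\mathsf{S}\,X$ and $x\in X$; $\mathrm{I}(x)=\{y\in M\mid y\sqsubseteq_{\mathsf{S}} x\}$ and for $A\subseteq M$, $\mathrm{I}(A)=\bigcup_{a\in A}\mathrm{I}(a)$; $x$ s-overlaps $y$ iff there are $X,Y\subseteq M$ with $x\,\mathsf{S}\,X$, $y\,\mathsf{S}\,Y$, $X\cap Y\neq\emptyset$; a set $A\subseteq M$ is pre-dense in $B\subseteq M$ iff for every $b\in B$ there is $a\in A$ such that $a$ s-overlaps $b$. Sum axioms: (S1) for every non-empty $X\subseteq M$ there is $x\in M$ with $x\,\mathsf{S}\,X$; (S2) $x\,\mathsf{S}\,X\wedge y\,\mathsf{S}\,X\to x=y$; (S3) $x\,\mathsf{S}\,X\wedge y\,\mathsf{S}\,Y\wedge x\in Y\to y\,\mathsf{S}\,(X\cup Y)$; (S4) if $x\,\mathsf{S}\,X$, $x\,\mathsf{S}\,Y$ and $y\in Y$, then there are $z\in X$ and $Z,U\subseteq M$ with $z\,\mathsf{S}\,Z$, $y\,\mathsf{S}\,U$ and $Z\cap U\neq\emptyset$; (S5) for all $x\in M$ and $X\subseteq M$: if $X$ is pre-dense in $\mathrm{I}(x)$ then $x\,\mathsf{S}\,(\mathrm{I}(x)\cap\mathrm{I}(X))$. *)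

(* Defs.v *)
Set Implicit Arguments.

Section Mereology.
Variable M : Type.

Definition mereological (le : M -> M -> Prop) : Prop :=
  inhabited M /\
  (forall x, le x x) /\
  (forall x y, le x y -> le y x -> x = y) /\
  (forall x y z, le x y -> le y z -> le x z) /\
  (forall x y, ~ le x y ->
     exists z, le z x /\ ~ (exists u, le u z /\ le u y)) /\
  (forall X : M -> Prop, (exists y, X y) ->
     exists x, (forall y, X y -> le y x) /\
       (forall a, le a x -> exists y z, X y /\ le z y /\ le z a)).

Definition overlap (le : M -> M -> Prop) (x y : M) : Prop :=
  exists z, le z x /\ le z y.

Definition sum_of (le : M -> M -> Prop) (x : M) (X : M -> Prop) : Prop :=
  (forall y, X y -> le y x) /\
  (forall a, le a x -> exists y, X y /\ overlap le a y).

Definition sle (S : M -> (M -> Prop) -> Prop) (x y : M) : Prop :=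
  exists X, S y X /\ X x.

Definition Iset (S : M -> (M -> Prop) -> Prop) (x : M) : M -> Prop :=
  fun y => sle S y x.

Definition IsetU (S : M -> (M -> Prop) -> Prop) (A : M -> Prop) : M -> Prop :=
  fun y => exists a, A a /\ sle S y a.

Definition s_overlaps (S : M -> (M -> Prop) -> Prop) (x y : M) : Prop :=
  exists X Y, S x X /\ S y Y /\ exists z, X z /\ Y z.

Definition pre_dense (S : M -> (M -> Prop) -> Prop) (A B : M -> Prop) : Prop :=
  forall b, B b -> exists a, A a /\ s_overlaps S a b.

Definition sum_structure (S : M -> (M -> Prop) -> Prop) : Prop :=
  (forall X : M -> Prop, (exists y, X y) -> exists x, S x X) /\
  (forall x y X, S x X -> S y X -> x = y) /\
  (forall x y X Y, S x X -> S y Y -> Y x ->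
     S y (fun z => X z \/ Y z)) /\
  (forall x y X Y, S x X -> S x Y -> Y y ->
     exists z Z U, X z /\ S z Z /\ S y U /\ exists w, Z w /\ U w) /\
  (forall x X, pre_dense S X (Iset S x) ->
     S x (fun z => Iset S x z /\ IsetU S X z)).

End Mereology.

(* Main.v *)
Require Import Defs.
From Stdlib Require Import Classical.

Theorem theorem4p1 (M : Type) (le : M -> M -> Prop) :
  mereological le -> sum_structure (sum_of le).
Proof.
  intros [_ [refl [anti [trans [P4 P5]]]]].
  assert (pair : forall z w, le w z -> sum_of le z (fun t => t = z \/ t = w)).
  { intros z w Hwz. split.
    - intros y [->| ->]; auto.
    - intros a Ha. exists z. split; [left; reflexivity|]. exists a; auto. }
  assert (sle_le : forall y x, sle (sum_of le) y x -> le y x).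
  { intros y x [X [[H1 _] H2]]. auto. }
  assert (le_sle : forall y x, le y x -> sle (sum_of le) y x).
  { intros y x H. exists (fun t => t = x \/ t = y). split; auto. }
  assert (sov : forall a b, s_overlaps (sum_of le) a b -> overlap le a b).
  { intros a b [X [Y [[HX _] [[HY _] [z [Xz Yz]]]]]]. exists z; auto. }
  assert (sub : forall x X y, sum_of le x X -> sum_of le y X -> le x y).
  { intros x X y [Hx1 Hx2] [Hy1 Hy2]. apply NNPP; intro Hn.
    destruct (P4 _ _ Hn) as [z [Hzx Hno]].
    destruct (Hx2 z Hzx) as [w [Xw [u [Huz Huw]]]].
    apply Hno. exists u. split; eauto. }
  unfold sum_structure. split; [|split; [|split; [|split]]].
  - intros X Hne. destruct (P5 X Hne) as [x [H1 H2]]. exists x. split; auto.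
    intros a Ha. destruct (H2 a Ha) as [y [z [Xy [Hzy Hza]]]].
    exists y. split; auto. exists z; auto.
  - intros x y X Hx Hy. apply anti; eauto.
  - intros x y X Y [Hx1 Hx2] [Hy1 Hy2] Yx. split.
    + intros z [Xz|Yz]; eauto.
    + intros a Ha. destruct (Hy2 a Ha) as [t [Yt Ht]]. exists t; auto.
  - intros x y X Y [Hx1 Hx2] [Hy1 Hy2] Yy.
    destruct (Hx2 y (Hy1 y Yy)) as [z [Xz [w [Hwy Hwz]]]].
    exists z, (fun t => t = z \/ t = w), (fun t => t = y \/ t = w).
    split; [auto|split; [auto|split; [auto|]]].
    exists w; auto.
  - intros x X Hpd. split.
    + intros z [Hz _]. auto.
    + intros a Ha. destruct (Hpd a (le_sle _ _ Ha)) as [b [Xb Hov]].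
      destruct (sov _ _ Hov) as [w [Hwb Hwa]].
      exists w. split.
      * split; [apply le_sle; eauto|]. exists b. split; auto.
      * exists w; auto.
Qed.
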